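(* Let $t,k,d,m,\ell$ be positive integers with $m\ge d$, and let $\mathbb{F}$ be a finite field. If $\Pi$ is a $t$-private $k$-server linear HSS for $\mathsf{POLY}_{d,m}(\mathbb{F})^\ell$, then $dt<k$ and the download cost of $\Pi$ is at least $k\ell\log_2|\mathbb{F}|/(k-dt)$. Consequently the download rate of $\Pi$ is at most $1-dt/k$.
   Context: $\mathsf{POLY}_{d,m}(\mathbb{F})$: polynomials in $\mathbb{F}[X_1,\dots,X_m]$ of total degree at most $d$. $\mathcal{F}^\ell$: the class of maps $(x_{i,r})_{i\in[m],r\in[\ell]}\mapsto(f_1(\mathbf{x}_1),\dots,f_\ell(\mathbf{x}_\ell))$, $\mathbf{x}_r=(x_{1,r},\dots,x_{m,r})$, $f_r\in\mathcal{F}$, where all $\ell m$ inputs are shared independently. A $k$-server HSS $(\mathsf{Share},\mathsf{Eval},\mathsf{Rec})$: randomized $\mathsf{Share}$ splits each input into $k$ input shares; server $j$ computes $y^{(j)}=\mathsf{Eval}(f,j,\text{its input shares})$; $\mathsf{Rec}(y^{(1)},\dots,y^{(k)})$ equals the function value with probability 1; $t$-private if for every set of at most $t$ servers the distribution of their input shares does not depend on the input. Linear HSS: $\mathcal{X}=\mathbb{F}$, $\mathsf{Share}(x,\mathbf{r})$ is $\mathbb{F}$-linear in $x$ and a uniformly random vector $\mathbf{r}$ over $\mathbb{F}$, $y^{(j)}\in\mathbb{F}^{b_j}$, and $\mathsf{Rec}$ is $\mathbb{F}$-linear ($\mathsf{Eval}$ arbitrary). Download cost $=\sum_j b_j\log_2|\mathbb{F}|$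 bits; download rate $=\ell\log_2|\mathbb{F}|/$download cost. *)

(* Defs.v *)
From HB Require Import structures.
From mathcomp Require Import all_boot all_order all_algebra all_field.
From mathcomp Require Import mpoly.
From mathcomp Require Import reals exp.
Set Implicit Arguments. Unset Strict Implicit. Unset Printing Implicit Defensive.
Import Order.TTheory GRing.Theory Num.Theory.
Local Open Scope ring_scope.

Definition POLY (F : finFieldType) (d m : nat) (p : mpoly.mpoly m F) : Prop :=
  forall mo, mo \in mpoly.msupp p -> (mpoly.mdeg mo <= d)%N.

(* Inputs of POLY_{d,m}(F)^l are indexed by (i, r) in [m] x [l]. *)
Definition input_idx (m l : nat) := ('I_m * 'I_l)%type.

(* A k-server linear HSS for POLY_{d,m}(F)^l.
   - Share(x, r) = (x *: shA j + r *m shB j)_{j < k}, F-linear in x and in the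
     uniformly random vector r in F^rho; server j's input share lies in F^(s j).
     The same Share is applied independently to each of the l*m inputs.
   - Eval f j (shares of server j) in F^(b j), arbitrary.
   - Rec (y^1..y^k) = \sum_j y^j *m rec j, F-linear, output in F^l. *)
Record linHSS (F : finFieldType) (k m l : nat) := LinHSS {
  rho : nat;
  shs : 'I_k -> nat;
  outb : 'I_k -> nat;
  shA : forall j : 'I_k, 'rV[F]_(shs j);
  shB : forall j : 'I_k, 'M[F]_(rho, shs j);
  ev : ('I_l -> mpoly.mpoly m F) -> forall j : 'I_k,
        (input_idx m l -> 'rV[F]_(shs j)) -> 'rV[F]_(outb j);
  rec : forall j : 'I_k, 'M[F]_(outb j, l)
}.
Arguments rho {F k m l} _.
Arguments shs {F k m l} _ _.
Arguments outb {F k m l} _ _.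
Arguments shA {F k m l} _ _.
Arguments shB {F k m l} _ _.
Arguments ev {F k m l} _ _ _ _.
Arguments rec {F k m l} _ _.

Section HSS.
Variables (F : finFieldType) (k m l : nat) (P : linHSS F k m l).

Definition share (j : 'I_k) (x : F) (r : 'rV[F]_(rho P)) : 'rV[F]_(shs P j) :=
  x *: shA P j + r *m shB _ _.

Definition rand_t := {ffun input_idx m l -> 'rV[F]_(rho P)}.

Definition reconstruct (f : 'I_l -> mpoly.mpoly m F)
    (x : input_idx m l -> F) (R : rand_t) : 'rV[F]_l :=
  \sum_(j < k) ev P f j (fun ir => share j (x ir) (R ir)) *m rec _ _.

(* Correctness with probability 1 (every randomness value has positive
   probability), for every function in POLY_{d,m}(F)^l and every input. *)
Definition hss_correct (d : nat) : Prop :=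
  forall (f : 'I_l -> mpoly.mpoly m F), (forall r, POLY d (f r)) ->
  forall (x : input_idx m l -> F) (R : rand_t),
    reconstruct f x R = \row_(r < l) mpoly.meval (fun i => x (i, r)) (f r).

(* Number of random choices producing view v for the servers in T:
   since R is uniform, this determines the distribution of the view. *)
Definition view_count (T : {set 'I_k}) (x : input_idx m l -> F)
    (v : forall j : 'I_k, input_idx m l -> 'rV[F]_(shs P j)) : nat :=
  #|[set R : rand_t | [forall j in T, forall ir, share j (x ir) (R ir) == v j ir]]|.

Definition hss_private (t : nat) : Prop :=
  forall T : {set 'I_k}, (#|T| <= t)%N ->
  forall x x' (v : forall j : 'I_k, input_idx m l -> 'rV[F]_(shs P j)),
    view_count T x v = view_count T x' v.

End HSS.

Definition log2 (R : realType) (x : R) : R := ln x / ln 2.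

Definition download_cost (R : realType) (F : finFieldType) k m l
    (P : linHSS F k m l) : R :=
  (\sum_(j < k) outb P j)%N%:R * log2 (#|F|%:R : R).

Definition download_rate (R : realType) (F : finFieldType) k m l
    (P : linHSS F k m l) : R :=
  (l%:R * log2 (#|F|%:R : R)) / download_cost R P.

(* Main.v *)
Require Import Defs.
From HB Require Import structures.
From mathcomp Require Import all_boot all_order all_algebra all_field.
From mathcomp Require mpoly.
From mathcomp Require Import reals exp.
Import Order.TTheory GRing.Theory Num.Theory.
Local Open Scope ring_scope.
Set Implicit Arguments. Unset Strict Implicit.

Section Priv.
Variables (F : finFieldType) (k m l t : nat) (P : linHSS F k m l).

Lemma priv_gamma (ir0 : input_idx m l) (Hpriv : hss_private P t) (T : {set 'I_k}) :
  (#|T| <= t)%N -> exists g : 'rV[F]_(rho P), forall j, j \in T -> shA P j + g *m shB P j = 0.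
Proof.
move=> HT.
pose x := fun ir : input_idx m l => if ir == ir0 then (1 : F) else 0.
pose v := fun (j : 'I_k) (ir : input_idx m l) => (0 : 'rV[F]_(shs P j)).
have H := Hpriv T HT x (fun _ => (0%R : F)) v.
have : (0 < view_count (P:=P) T (fun _ => (0%R : F)) v)%N.
  apply/card_gt0P; exists [ffun => 0]; rewrite inE; apply/forall_inP => j _; apply/forallP => ir.
  by rewrite /share /v ffunE scale0r mul0mx addr0.
rewrite -H => /card_gt0P [Rr]; rewrite inE => /forall_inP HR.
exists (Rr ir0) => j Hj; have := forallP (HR j Hj) ir0.
by rewrite /share /x eqxx scale1r => /eqP.
Qed.
End Priv.
Lemma alt_cancel (R : pzRingType) (V : lmodType R) (I : finType) (D : {set I}) (i : I)
  (phi : {set I} -> V) : i \in D -> (forall S, phi S = phi (S :\ i)) ->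
  \sum_(S in powerset D) (-1) ^+ #|S| *: phi S = 0.
Proof.
move=> iD Hphi.
rewrite (bigID (fun S : {set I} => i \in S)) /=.
rewrite (reindex_onto (fun S => i |: S) (fun S => S :\ i)) /=; last first.
  by move=> S /andP [_ iS]; rewrite setD1K.
set A := (X in X + _); set B := (X in _ + X).
have -> : B = - A.
  rewrite /A /B -sumrN; apply: eq_big => S.
    rewrite !powersetE subUset sub1set iD /= setU11 andbT.
    case: (boolP (i \in S)) => iS /=; last by rewrite setU1K // eqxx andbT.
    rewrite andbF; symmetry; apply/negbTE; rewrite negb_and; apply/orP; right; apply/eqP => h.
    by move: iS; rewrite -h setD11.
  move=> /andP [SD iS].
  by rewrite cardsU1 iS exprS mulN1r scaleNr opprK [phi (i |: S)]Hphi setU1K.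
by rewrite subrr.
Qed.
Definition mo (m d : nat) : mpoly.multinom m := mpoly.Multinom [tuple ((i < d)%N : nat) | i < m].

Lemma POLY_mo (F : finFieldType) m d : (d <= m)%N -> POLY d (@mpoly.mpolyX m F (mo m d)).
Proof.
move=> hmd mo'; rewrite mpoly.msuppX inE => /eqP ->.
rewrite mpoly.mdegE.
rewrite (eq_bigr (fun i : 'I_m => nat_of_bool (i < d)%N)); last by move=> i _; rewrite mpoly.multinomE tnth_mktuple.
rewrite -(big_mkord predT (fun i => nat_of_bool (i < d)%N)).
rewrite (@big_cat_nat _ _ _ d) //=.
rewrite [X in (_ + X)%N]big1_seq ?addn0; last first.
  move=> i /andP [_]; rewrite mem_index_iota => /andP [hi _]; rewrite (_ : (i < d)%N = false) //; apply/negbTE; rewrite -leqNgt //.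
rewrite big_nat_cond (eq_bigr (fun _ => 1%N)); last first.
  by move=> i /andP [/andP [_ ->] _].
by rewrite -big_nat_cond sum_nat_const_nat subn0 muln1.
Qed.

Definition xS (F : finFieldType) m l (S : {set 'I_m}) (r0 : 'I_l) (ir : input_idx m l) : F :=
  if (ir.1 \in S) && (ir.2 == r0) then 1 else 0.

Lemma eval_mo (F : finFieldType) m l d (S : {set 'I_m}) (r0 : 'I_l) :
  (0 < d)%N -> (d <= m)%N ->
  \row_(r < l) mpoly.meval (fun i => xS F S r0 (i, r)) (@mpoly.mpolyX m F (mo m d)) =
  if [set i : 'I_m | (i < d)%N] \subset S then delta_mx 0 r0 else 0.
Proof.
move=> hd hmd; apply/rowP => r; rewrite mxE mpoly.mevalX.
have i0 : 'I_m by exists 0%N; exact: leq_trans hd hmd.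
have [hr|hr] := eqVneq r r0.
- case: ifP => hsub.
  + rewrite mxE hr !eqxx /=; apply: big1 => i _.
    rewrite /xS /= mpoly.multinomE tnth_mktuple eqxx andbT.
    case: ifP => hi; first by rewrite expr1n.
    case hid: (i < d)%N => /=; last by rewrite expr0.
    by move/subsetP: hsub => /(_ i); rewrite inE hid hi => /(_ isT).
  + rewrite mxE.
    have [i /andP [hi hiS]] : exists i, (i \in [set i : 'I_m | (i < d)%N]) && (i \notin S).
      move/negbT: hsub => /subsetPn [i h1 h2]; exists i; by rewrite h1 h2.
    rewrite (bigD1 i) //= /xS /= (negbTE hiS) mpoly.multinomE tnth_mktuple.
    by move: hi; rewrite inE => ->; rewrite expr1 mul0r.
- have i00 : 'I_m by exact: i0.
  pose z : 'I_m := Ordinal (leq_trans hd hmd).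
  rewrite (bigD1 z) //= /xS /= (negbTE hr) andbF mpoly.multinomE tnth_mktuple /= hd expr1 mul0r.
  by case: ifP => _; rewrite ?mxE ?(negbTE hr) ?andbF.
Qed.

From Stdlib Require Import FunctionalExtensionality.

Lemma key (F : finFieldType) k m l t d (P : linHSS F k m l) (hd : (0 < d)%N) (hmd : (d <= m)%N)
  (hl : (0 < l)%N) (Hcor : hss_correct P d) (Hpriv : hss_private P t)
  (c : 'I_k -> option 'I_m)
  (Hc1 : forall j i, c j = Some i -> (i < d)%N)
  (Hc2 : forall i, (#|[set j | c j == Some i]| <= t)%N) :
  (l <= \sum_(j | c j == None) outb P j)%N.
Proof.
pose i0 : 'I_m := Ordinal (leq_trans hd hmd).
pose r00 : 'I_l := Ordinal hl.
have [g Hg] : exists g : 'I_m -> 'rV[F]_(rho P),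
    forall i j, c j = Some i -> shA P j + g i *m shB P j = 0.
  suff : forall i : 'I_m, exists gi : 'rV[F]_(rho P),
      forall j, c j = Some i -> shA P j + gi *m shB P j = 0 by move/fin_all_exists.
  move=> i; have [gi Hgi] := priv_gamma (i0, r00) Hpriv (Hc2 i).
  by exists gi => j hj; apply: Hgi; rewrite inE hj.
pose D := [set i : 'I_m | (i < d)%N].
pose M := (\sum_(j | c j == None) <<rec P j>>)%MS.
suff Hdelta : forall (r0 : ordinal l), ((delta_mx 0 r0 : 'rV[F]_l) <= M)%MS.
  have : (1%:M <= M)%MS by apply/row_subP => r; rewrite row1; exact: Hdelta.
  move/mxrankS; rewrite mxrank1 => h; apply: leq_trans h _.
  apply: leq_trans (mxrank_sum_leqif _).1 _ => /=.
  by apply: leq_sum => j _; rewrite genmxE rank_leq_row.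
move=> r0.
pose f := fun _ : 'I_l => @mpoly.mpolyX m F (mo m d).
pose sh j S := fun ir : input_idx m l => xS F S r0 ir *: (shA P j + g ir.1 *m shB P j).
have HE : forall S, \sum_j ev P f j (sh j S) *m rec P j =
    if D \subset S then (delta_mx 0 r0 : 'rV[F]_l) else 0.
  move=> S; rewrite -(@eval_mo F m l d S r0 hd hmd).
  rewrite -(Hcor f (fun _ => @POLY_mo F m d hmd) (xS F S r0) [ffun ir => xS F S r0 ir *: g ir.1]).
  rewrite /reconstruct; apply: eq_bigr => j _; congr (_ *m _); congr (ev P f j).
  by apply: functional_extensionality => ir; rewrite /share /sh ffunE -scalemxAl scalerDr.
have H2 : \sum_(S in powerset D) (-1) ^+ #|S| *: (if D \subset S then delta_mx 0 r0 else 0 : 'rV[F]_l)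
    = (-1) ^+ #|D| *: (delta_mx 0 r0 : 'rV[F]_l).
  rewrite (bigD1 D) ?powersetE //= subxx big1 ?addr0 // => S /andP [SD SnD].
  rewrite powersetE in SD; case: ifP => h; last by rewrite scaler0.
  by exfalso; move/negP: SnD; apply; rewrite eqEsubset SD h.
have H3 : \sum_(S in powerset D) (-1) ^+ #|S| *: (if D \subset S then delta_mx 0 r0 else 0 : 'rV[F]_l)
   = \sum_j (\sum_(S in powerset D) (-1) ^+ #|S| *: ev P f j (sh j S)) *m rec P j.
  transitivity (\sum_(S in powerset D) (-1) ^+ #|S| *: (\sum_j ev P f j (sh j S) *m rec P j)).
    by apply: eq_bigr => S _; rewrite HE.
  under eq_bigr => S _ do rewrite scaler_sumr.
  rewrite exchange_big /=; apply: eq_bigr => j _; rewrite mulmx_suml.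
  by apply: eq_bigr => S _; rewrite scalemxAl.
rewrite H2 (bigID (fun j => c j == None)) /= in H3.
rewrite [X in _ + X]big1 ?addr0 in H3; last first.
  move=> j; case hc: (c j) => [i|] // _.
  rewrite (@alt_cancel _ _ _ D i (fun S => ev P f j (sh j S))) ?mul0mx //.
    by rewrite inE (Hc1 _ _ hc).
  move=> S; congr (ev P f j); apply: functional_extensionality => ir.
  rewrite /sh /xS; have [e|ne] := eqVneq ir.1 i.
    by rewrite e (Hg _ _ hc) !scaler0.
  by rewrite in_setD1 ne.
rewrite -[delta_mx 0 r0](signrZK #|D|) H3; apply: scalemx_sub; apply: summx_sub => j hj.
apply: (sumsmx_sup j) => //; rewrite genmxE; exact: submxMl.
Qed.

From mathcomp Require Import zify.
Section Comb. Local Open Scope nat_scope.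
Definition cs (k m t d : nat) (s j : 'I_k) : option 'I_m :=
  if ((j + s) %% k < d * t)%N then insub ((j + s) %% k %/ t) else None.

Lemma cs1 k m t d s j i : (0 < t)%N -> @cs k m t d s j = Some i -> (i < d)%N.
Proof.
move=> ht; rewrite /cs; case: ifP => // h.
case: insubP => // i' _ hv [<-]; rewrite hv ltn_divLR //.
Qed.

Lemma cs_val k m t d s j i : @cs k m t d s j = Some i -> val i = ((j + s) %% k %/ t)%N /\ ((j + s) %% k < d * t)%N.
Proof.
rewrite /cs; case: ifP => // h.
by case: insubP => // i' _ hv [<-]; rewrite hv.
Qed.

Lemma cs2 k m t d s i : (0 < t)%N -> (#|[set j | @cs k m t d s j == Some i]| <= t)%N.
Proof.
move=> ht.
have := @leq_card_in _ _ (fun j : 'I_k => (Ordinal (ltn_pmod ((j + s) %% k) ht) : 'I_t))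
  [set j | @cs k m t d s j == Some i].
rewrite card_ord; apply => j1 j2; rewrite !inE => /eqP h1 /eqP h2 [].
have [e1 _] := cs_val h1; have [e2 _] := cs_val h2.
move=> hm.
have hu : ((j1 + s) %% k = (j2 + s) %% k)%N.
  by rewrite (divn_eq ((j1 + s) %% k) t) (divn_eq ((j2 + s) %% k) t) -e1 -e2 hm.
apply/val_inj => /=.
move: hu; move/eqP; rewrite eqn_modDr => /eqP.
by rewrite !modn_small.
Qed.

Lemma csNone k m t d s j : (0 < t)%N -> (d <= m)%N ->
  (@cs k m t d s j == None) = (d * t <= (j + s) %% k)%N.
Proof.
move=> ht hdm; rewrite /cs; case: ifP => h.
  case: insubP => [i' _ _ | hn] /=; first by rewrite leqNgt h.
  by move/negP: hn; case; rewrite (leq_trans _ hdm) // ltn_divLR.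
by rewrite leqNgt h.
Qed.

Lemma count_s k d t (j : 'I_k) : (d * t <= k)%N ->
  (\sum_(s < k) (d * t <= (j + s) %% k)%N = k - d * t)%N.
Proof.
move=> hdk.
have hk : (0 < k)%N by case: j => [j' /=]; lia.
pose h := fun s : 'I_k => (Ordinal (ltn_pmod (j + s) hk) : 'I_k).
have hinj : injective h.
  move=> s1 s2 /(congr1 val) /= /eqP; rewrite eqn_modDl => /eqP.
  by rewrite !modn_small // => e; apply/val_inj.
transitivity (\sum_(u < k) (d * t <= u)%N).
  by rewrite [RHS](reindex_inj hinj) /=.
rewrite -(big_mkord predT (fun u => nat_of_bool (d * t <= u)%N)).
rewrite (@big_cat_nat _ _ _ (d * t)) //=.
rewrite big1_seq ?add0n; last first.
  by move=> u /andP [_]; rewrite mem_index_iota => /andP [_ hu]; rewrite leqNgt hu.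
rewrite big_nat_cond (eq_bigr (fun _ => 1%N)); last first.
  by move=> u /andP [/andP [-> _] _].
by rewrite -big_nat_cond sum_nat_const_nat muln1.
Qed.
End Comb.
Unset Implicit Arguments.

Lemma nat_part (F : finFieldType) (t k d m l : nat)
  (ht : (0 < t)%N) (hk : (0 < k)%N) (hd : (0 < d)%N)
  (hl : (0 < l)%N) (hmd : (d <= m)%N)
  (P : linHSS F k m l) (Hcor : hss_correct P d) (Hpriv : hss_private P t) :
  (d * t < k)%N /\ (k * l <= (k - d * t) * \sum_(j < k) outb P j)%N.
Proof.
have K s := key hd hmd hl Hcor Hpriv (c := @cs k m t d s) (fun j i => @cs1 k m t d s j i ht) (@cs2 k m t d s ^~ ht).
have hdt : (d * t < k)%N.
  rewrite ltnNge; apply/negP => hkd.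
  have := K (Ordinal hk); rewrite big1 ?leqn0 ?(gtn_eqF hl) // => j.
  rewrite csNone // => h; exfalso; move: h; by rewrite leqNgt (leq_trans _ hkd) // ltn_pmod.
split => //.
have -> : (k * l = \sum_(s < k) l)%N by rewrite sum_nat_const card_ord.
apply: leq_trans; first by apply: leq_sum => s _; exact: K s.
under eq_bigr => s _ do rewrite big_mkcond /=.
rewrite exchange_big /= big_distrr /=; apply: leq_sum => j _.
under eq_bigr => s _ do rewrite csNone //.
rewrite -(count_s j (ltnW hdt)) big_distrl /=.
by apply: leq_sum => s _; case: (d * t <= _)%N; rewrite ?mul1n ?mul0n.
Qed.

From mathcomp Require Import ring lra.

Theorem mainTheorem9 (R : realType) (F : finFieldType) (t k d m l : nat)
  (ht : (0 < t)%N) (hk : (0 < k)%N) (hd : (0 < d)%N) (hm : (0 < m)%N)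
  (hl : (0 < l)%N) (hmd : (d <= m)%N)
  (P : linHSS F k m l) (Hcor : hss_correct P d) (Hpriv : hss_private P t) :
  [/\ (d * t < k)%N,
      download_cost R P >= (k * l)%N%:R * log2 (#|F|%:R : R) / (k - d * t)%N%:R
    & download_rate R P <= 1 - (d * t)%N%:R / k%:R].
Proof.
have [hdt hN] := nat_part F t k d m l ht hk hd hl hmd P Hcor Hpriv.
rewrite /download_rate /download_cost.
set N := (\sum_(j < k) outb P j)%N in hN *.
set L := log2 (#|F|%:R : R).
have hL : 0 < L.
  rewrite /L /log2 divr_gt0 // ln_gt0 // ?ltr1n //.
  exact: card_finNzRing_gt1.
have hkd : 0 < (k - d * t)%N%:R :> R by rewrite ltr0n subn_gt0.
have hNpos : (0 < N)%N.
  rewrite lt0n; apply/negP => /eqP hN0; move: hN; rewrite hN0 muln0 leqn0 muln_eq0.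
  by rewrite (gtn_eqF hk) (gtn_eqF hl).
have hNr : 0 < N%:R :> R by rewrite ltr0n.
have hkr : 0 < k%:R :> R by rewrite ltr0n.
split => //.
  by rewrite ler_pdivrMr // [X in _ <= X]mulrAC ler_pM2r // -natrM ler_nat [(N * _)%N]mulnC.
have -> : l%:R * L / (N%:R * L) = l%:R / N%:R.
  by field; apply/andP; split; apply: lt0r_neq0.
have -> : 1 - (d * t)%N%:R / k%:R = (k - d * t)%N%:R / k%:R :> R.
  by rewrite natrB ?(ltnW hdt) //; field; apply: lt0r_neq0.
rewrite ler_pdivrMr // mulrAC ler_pdivlMr // -!natrM ler_nat.
by rewrite mulnC.
Qed.
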